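(* Under the setting of the context, if (TS1) holds and $u$ is the solution of problem (P), then $$\mu_x\sum_{m=0}^\infty u(m\mu_x,t)=A\mu_x\quad\text{for all }t\in\mathbb{T}$$ (and $u(m\mu_x,t)=0$ for $m<0$, so this is the sum over all $m\in\mathbb{Z}$).
   Context: A time scale $\mathbb{T}$ is a nonempty closed subset of $\mathbb{R}$; here $\min\mathbb{T}=0$ and $\sup\mathbb{T}=+\infty$. $\sigma(t)=\inf\{s\in\mathbb{T}:s>t\}$ is the forward jump and $\mu_t(t)=\sigma(t)-t$ the graininess; $u^{\Delta_t}$ denotes the (Hilger) delta derivative in $t$. Fix $A>0$, $k>0$, $\mu_x>0$, $\Omega=\mu_x\mathbb{Z}\times\mathbb{T}$. Problem (P): $u^{\Delta_t}(x,t)+k\frac{u(x,t)-u(x-\mu_x,t)}{\mu_x}=0$ for $(x,t)\in\Omega$, $u(0,0)=A$, $u(x,0)=0$ for $x\ne0$. A solution is $u:\Omega\to\mathbb{R}$ with each $u(x,\cdot)$ delta differentiable on $\mathbb{T}$, satisfying (P), and bounded on $\mu_x\mathbb{Z}\times(\mathbb{T}\cap[0,T_0])$ for every $T_0>0$. Condition (TS1): $1-\frac{k\mu_t(t)}{\mu_x}>0$ for all $t\in\mathbb{T}$. *)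

(* Defs.v *)
From Stdlib Require Import Reals ZArith Classical ClassicalEpsilon.
Open Scope R_scope.

Record time_scale (T : R -> Prop) : Prop := {
  ts_closed : forall x, (forall eps, 0 < eps -> exists y, T y /\ Rabs (x - y) < eps) -> T x;
  ts_zero : T 0;
  ts_min : forall t, T t -> 0 <= t;
  ts_unbounded : forall M, exists t, T t /\ M < t
}.

Definition is_glb (E : R -> Prop) (m : R) : Prop :=
  (forall x, E x -> m <= x) /\ (forall b, (forall x, E x -> b <= x) -> b <= m).

(* forward jump sigma(t) = inf { s in T : s > t } (chosen classically;
   the infimum exists whenever T is unbounded above). *)
Definition sigma (T : R -> Prop) (t : R) : R :=
  epsilon (inhabits 0) (fun m => is_glb (fun s => T s /\ t < s) m).

Definition graininess (T : R -> Prop) (t : R) : R := sigma T t - t.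

Definition delta_deriv (T : R -> Prop) (f : R -> R) (t d : R) : Prop :=
  forall eps, 0 < eps -> exists delta, 0 < delta /\
    forall s, T s -> Rabs (t - s) < delta ->
      Rabs (f (sigma T t) - f s - d * (sigma T t - s)) <= eps * Rabs (sigma T t - s).

(* u m t stands for u(m * mu_x, t), m in Z. Solution of problem (P). *)
Definition is_solution_P (T : R -> Prop) (A k mux : R) (u : Z -> R -> R) : Prop :=
  (forall m t, T t -> exists d, delta_deriv T (u m) t d /\
      d + k * ((u m t - u (m - 1)%Z t) / mux) = 0) /\
  u 0%Z 0 = A /\
  (forall m, m <> 0%Z -> u m 0 = 0) /\
  (forall T0, 0 < T0 -> exists B, forall m t, T t -> t <= T0 -> Rabs (u m t) <= B).

(* Main.v *)
Require Import Defs.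
From Stdlib Require Import Reals ZArith Lra Lia Classical ClassicalEpsilon.
Open Scope R_scope.

Section S.
Variable T : R -> Prop.
Hypothesis HT : time_scale T.

Lemma sigma_spec t : T t -> is_glb (fun s => T s /\ t < s) (Defs.sigma T t).
Proof.
  intros Ht. unfold Defs.sigma. apply epsilon_spec.
  destruct (completeness (fun x => T (-x) /\ t < -x)) as [m [Hub Hl]].
  - exists (-t). intros x [_ Hx]. lra.
  - destruct (ts_unbounded T HT t) as [s [Ts ts]]. exists (-s).
    rewrite Ropp_involutive. auto.
  - exists (-m). split.
    + intros x [Tx tx]. assert (-x <= m). { apply Hub. rewrite Ropp_involutive. auto. } lra.
    + intros b Hb. assert (m <= -b). { apply Hl. intros x [Tx tx]. assert (b <= -x) by (apply Hb; auto). lra. } lra.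
Qed.

Lemma sigma_ge t : T t -> t <= Defs.sigma T t.
Proof. intros Ht. destruct (sigma_spec t Ht) as [_ H]. apply H. intros x [_ Hx]. lra. Qed.

Lemma sigma_gap t s : T t -> T s -> t < s -> Defs.sigma T t <= s.
Proof. intros Ht Ts ts. destruct (sigma_spec t Ht) as [H _]. apply H. auto. Qed.

Lemma sigma_approx t d : T t -> 0 < d -> exists y, T y /\ t < y /\ y < Defs.sigma T t + d.
Proof.
  intros Ht Hd. apply NNPP; intro Hn.
  destruct (sigma_spec t Ht) as [_ H].
  assert (Defs.sigma T t + d <= Defs.sigma T t); [|lra].
  apply H. intros x [Tx tx]. apply Rnot_lt_le. intro Hc. apply Hn. exists x. auto.
Qed.

Lemma sigma_T t : T t -> T (Defs.sigma T t).
Proof.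
  intros Ht. apply (ts_closed T HT). intros e He.
  destruct (sigma_approx t e Ht He) as [y [Ty [ty ys]]].
  assert (Defs.sigma T t <= y) by (apply sigma_gap; auto).
  exists y. split; auto. rewrite Rabs_left1; lra.
Qed.

Lemma small_zero a b : 0 <= b -> (forall e, 0 < e -> a <= e * b) -> a <= 0.
Proof.
  intros Hb H. apply Rnot_lt_le. intro Ha.
  assert (Hp : 0 < a / (2 * (b + 1))) by (apply Rdiv_lt_0_compat; lra).
  specialize (H _ Hp).
  assert (a / (2 * (b+1)) * b < a); [|lra].
  apply Rlt_le_trans with (a / (2 * (b+1)) * (2*(b+1))).
  - apply Rmult_lt_compat_l; lra.
  - unfold Rdiv. rewrite Rmult_assoc, Rinv_l; lra.
Qed.

Lemma dd_rs f t d : T t -> delta_deriv T f t d ->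
  f (Defs.sigma T t) = f t + (Defs.sigma T t - t) * d.
Proof.
  intros Ht Hd.
  assert (Rabs (f (Defs.sigma T t) - f t - d * (Defs.sigma T t - t)) <= 0).
  { apply (small_zero _ (Rabs (Defs.sigma T t - t))). apply Rabs_pos.
    intros e He. destruct (Hd e He) as [de [Hde H]]. apply H; auto.
    rewrite Rminus_diag, Rabs_R0. lra. }
  pose proof (Rabs_pos (f (Defs.sigma T t) - f t - d * (Defs.sigma T t - t))).
  assert (Rabs (f (Defs.sigma T t) - f t - d * (Defs.sigma T t - t)) = 0) by lra.
  destruct (Req_dec (f (Defs.sigma T t) - f t - d * (Defs.sigma T t - t)) 0) as [E|E]; [lra|apply Rabs_no_R0 in E; lra].
Qed.

Lemma dd_lincomb f g t d1 d2 a b : delta_deriv T f t d1 -> delta_deriv T g t d2 ->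
  delta_deriv T (fun x => a * f x + b * g x) t (a * d1 + b * d2).
Proof.
  intros H1 H2 e He.
  set (e' := e / (Rabs a + Rabs b + 1)).
  assert (He' : 0 < e') by (apply Rdiv_lt_0_compat; [lra| pose proof (Rabs_pos a); pose proof (Rabs_pos b); lra]).
  destruct (H1 e' He') as [x1 [Hx1 K1]]. destruct (H2 e' He') as [x2 [Hx2 K2]].
  exists (Rmin x1 x2). split. apply Rmin_pos; auto.
  intros s Ts Hs.
  assert (Hs1 : Rabs (t - s) < x1) by (pose proof (Rmin_l x1 x2); lra).
  assert (Hs2 : Rabs (t - s) < x2) by (pose proof (Rmin_r x1 x2); lra).
  specialize (K1 s Ts Hs1). specialize (K2 s Ts Hs2).
  set (X := f (Defs.sigma T t) - f s - d1 * (Defs.sigma T t - s)) in *.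
  set (Y := g (Defs.sigma T t) - g s - d2 * (Defs.sigma T t - s)) in *.
  set (Z := Rabs (Defs.sigma T t - s)) in *.
  replace (a * f (Defs.sigma T t) + b * g (Defs.sigma T t) - (a * f s + b * g s) - (a * d1 + b * d2) * (Defs.sigma T t - s)) with (a * X + b * Y) by (unfold X, Y; ring).
  eapply Rle_trans. apply Rabs_triang. rewrite !Rabs_mult.
  assert (Rabs a * Rabs X <= Rabs a * (e' * Z)) by (apply Rmult_le_compat_l; auto; apply Rabs_pos).
  assert (Rabs b * Rabs Y <= Rabs b * (e' * Z)) by (apply Rmult_le_compat_l; auto; apply Rabs_pos).
  assert ((Rabs a + Rabs b) * (e' * Z) <= e * Z).
  { assert (0 <= Z) by apply Rabs_pos. rewrite <- Rmult_assoc. apply Rmult_le_compat_r; auto.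
    pose proof (Rabs_pos a); pose proof (Rabs_pos b).
    assert (E : e' * (Rabs a + Rabs b + 1) = e) by (unfold e'; field; lra). rewrite <- E. nra. }
  lra.
Qed.

Lemma dd_ext f g t d : (forall x, f x = g x) -> delta_deriv T f t d -> delta_deriv T g t d.
Proof. intros E H e He. destruct (H e He) as [x [Hx K]]. exists x. split; auto.
  intros s Ts Hs. rewrite <- !E. auto. Qed.

Lemma dd_const c t : delta_deriv T (fun _ => c) t 0.
Proof. intros e He. exists 1. split. lra. intros. replace (c - c - 0 * (Defs.sigma T t - s)) with 0 by ring.
  rewrite Rabs_R0. apply Rmult_le_pos. lra. apply Rabs_pos. Qed.

Lemma dd_id t : delta_deriv T (fun x => x) t 1.
Proof. intros e He. exists 1. split. lra. intros. replace (Defs.sigma T t - s - 1 * (Defs.sigma T t - s)) with 0 by ring.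
  rewrite Rabs_R0. apply Rmult_le_pos. lra. apply Rabs_pos. Qed.


Lemma abs_between a b : Rabs a <= b -> -b <= a <= b.
Proof. unfold Rabs; destruct (Rcase_abs a); intros; lra. Qed.

Lemma dd_cont_left f t d : T t -> delta_deriv T f t d ->
  (forall del, 0 < del -> exists r, T r /\ t - del < r /\ r < t) ->
  (forall r, T r -> r < t -> 0 <= f r) -> 0 <= f t.
Proof.
  intros Ht Hd Hld Hpos. apply Rnot_lt_le. intro Hneg.
  set (a := - f t). assert (Ha : 0 < a) by (unfold a; lra).
  set (mu := Defs.sigma T t - t).
  assert (Hmu : 0 <= mu) by (unfold mu; pose proof (sigma_ge t Ht); lra).
  set (e := a / (2 * (2 * mu + 1))).
  assert (He : 0 < e) by (unfold e; apply Rdiv_lt_0_compat; lra).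
  assert (Ee : e * (2 * mu + 1) = a / 2) by (unfold e; field; lra).
  destruct (Hd e He) as [dl [Hdl K]].
  set (dl' := Rmin dl (Rmin 1 (a / (2 * (Rabs d + 1))))).
  assert (Hdl' : 0 < dl').
  { unfold dl'. apply Rmin_pos; auto. apply Rmin_pos. lra. apply Rdiv_lt_0_compat; auto.
    pose proof (Rabs_pos d). lra. }
  assert (D1 : dl' <= dl) by apply Rmin_l.
  assert (D2 : dl' <= 1) by (eapply Rle_trans; [apply Rmin_r|apply Rmin_l]).
  assert (D3 : dl' <= a / (2 * (Rabs d + 1))) by (eapply Rle_trans; [apply Rmin_r|apply Rmin_r]).
  destruct (Hld dl' Hdl') as [r [Tr [r1 r2]]].
  assert (Kr := K r Tr). assert (Kt := K t Ht).
  assert (A1 : Rabs (t - r) < dl) by (rewrite Rabs_right; lra).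
  assert (A2 : Rabs (t - t) < dl) by (rewrite Rminus_diag, Rabs_R0; lra).
  specialize (Kr A1). specialize (Kt A2).
  fold mu in Kt. replace (Defs.sigma T t - t) with mu in Kt by reflexivity.
  rewrite (Rabs_right mu) in Kt by lra.
  rewrite (Rabs_right (Defs.sigma T t - r)) in Kr by (unfold mu in *; lra).
  specialize (Hpos r Tr r2).
  apply abs_between in Kr. apply abs_between in Kt. 
  assert (Hdd : Rabs d * (t - r) < a / 2).
  { assert (Rabs d * (t - r) <= Rabs d * (a / (2 * (Rabs d + 1)))).
    { apply Rmult_le_compat_l. apply Rabs_pos. lra. }
    assert (Rabs d * (a / (2 * (Rabs d + 1))) < a / 2).
    { pose proof (Rabs_pos d).
      replace (Rabs d * (a / (2 * (Rabs d + 1)))) with ((a/2) * (Rabs d / (Rabs d + 1))) by (field; lra).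
      assert (Rabs d / (Rabs d + 1) < 1).
      { apply (Rmult_lt_reg_r (Rabs d + 1)). lra. unfold Rdiv. rewrite Rmult_assoc, Rinv_l; lra. }
      nra. }
    lra. }
  assert (Hd2 : - (Rabs d * (t - r)) <= d * (t - r)).
  { assert (0 <= t - r) by lra. pose proof (Rabs_pos d). destruct (Rle_dec 0 d).
    - rewrite Rabs_right in * by lra. nra.
    - rewrite Rabs_left in * by lra. nra. }
  assert (He2 : e * (Defs.sigma T t - r) + e * mu < a / 2).
  { replace (Defs.sigma T t - r) with (mu + (t - r)) by (unfold mu; ring).
    assert (e * (t - r) < e * 1) by (apply Rmult_lt_compat_l; lra). nra. }
  replace (Defs.sigma T t - r) with (mu + (t - r)) in * by (unfold mu; ring).
  replace (d * (mu + (t - r))) with (d * mu + d * (t - r)) in Kr by ring. assert (f t = - a) by (unfold a; ring). lra.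
Qed.

Lemma IND (S : R -> Prop) :
  S 0 ->
  (forall t, T t -> (forall r, T r -> r <= t -> S r) -> t < Defs.sigma T t -> S (Defs.sigma T t)) ->
  (forall t, T t -> (forall r, T r -> r <= t -> S r) -> Defs.sigma T t = t ->
     exists del, 0 < del /\ forall s, T s -> t < s -> s < t + del -> S s) ->
  (forall t, T t -> (forall r, T r -> r < t -> S r) ->
     (forall del, 0 < del -> exists r, T r /\ t - del < r /\ r < t) -> S t) ->
  forall t, T t -> S t.
Proof.
  intros H0 HRS HRD HLD t1 Tt1. apply NNPP. intro Hn.
  set (C := fun s => T s /\ s <= t1 /\ forall r, T r -> r <= s -> S r).
  assert (Hmin := ts_min T HT).
  assert (C0 : C 0).
  { split. apply (ts_zero T HT). split. apply Hmin; auto.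
    intros r Tr Hr. assert (r = 0) by (pose proof (Hmin r Tr); lra). subst; auto. }
  destruct (completeness C) as [tau [Hub Hl]].
  { exists t1. intros x [_ [Hx _]]. auto. }
  { exists 0. auto. }
  assert (Happ : forall e, 0 < e -> exists c, C c /\ tau - e < c /\ c <= tau).
  { intros e He. apply NNPP. intro Hc. assert (tau <= tau - e); [|lra].
    apply Hl. intros x Cx. apply Rnot_lt_le. intro Hx. apply Hc. exists x. split; auto.
    }
  assert (ClA : forall r, T r -> r < tau -> S r).
  { intros r Tr Hr. destruct (Happ (tau - r)) as [c [[Tc [c1 c2]] [c3 c4]]]. lra.
    apply c2; auto. lra. }
  assert (Ttau : T tau).
  { apply (ts_closed T HT). intros e He. destruct (Happ e He) as [c [[Tc _] [c3 c4]]].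
    exists c. split; auto. rewrite Rabs_right; lra. }
  assert (Stau : S tau).
  { destruct (classic (forall del, 0 < del -> exists r, T r /\ tau - del < r /\ r < tau)) as [Hd|Hd].
    - apply HLD; auto.
    - apply not_all_ex_not in Hd. destruct Hd as [d0 Hd0].
      apply imply_to_and in Hd0. destruct Hd0 as [Hd0 Hd1].
      destruct (Happ d0 Hd0) as [c [[Tc [c1 c2]] [c3 c4]]].
      destruct (Rle_lt_or_eq_dec c tau c4) as [Hlt|Heq].
      + exfalso. apply Hd1. exists c. auto.
      + subst c. apply c2; auto; lra. }
  assert (Sle : forall r, T r -> r <= tau -> S r).
  { intros r Tr Hr. destruct (Rle_lt_or_eq_dec r tau Hr) as [Hlt|Heq]; [apply ClA; auto|subst; auto]. }
  assert (tau1 : tau <= t1) by (apply Hl; intros x [_ [Hx _]]; auto).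
  assert (tau2 : tau < t1).
  { destruct (Rle_lt_or_eq_dec tau t1 tau1) as [Hlt|Heq]; auto. subst. contradiction. }
  pose proof (sigma_ge tau Ttau) as Hsg.
  destruct (Rle_lt_or_eq_dec tau (Defs.sigma T tau) Hsg) as [Hrs|Hrd].
  - assert (Cs : C (Defs.sigma T tau)).
    { split. apply sigma_T; auto. split. apply sigma_gap; auto.
      intros r Tr Hr. destruct (Rle_dec r tau) as [Hr'|Hr']. apply Sle; auto.
      assert (Defs.sigma T tau <= r) by (apply sigma_gap; auto; lra).
      replace r with (Defs.sigma T tau) by lra. apply HRS; auto. }
    assert (Defs.sigma T tau <= tau) by (apply Hub; auto). lra.
  - destruct (HRD tau Ttau Sle (eq_sym Hrd)) as [del [Hdel K]].
    destruct (sigma_approx tau (Rmin del (t1 - tau)) Ttau) as [y [Ty [y1 y2]]].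
    { apply Rmin_pos; lra. }
    rewrite <- Hrd in y2.
    assert (y2a : y < tau + del) by (pose proof (Rmin_l del (t1 - tau)); lra).
    assert (y2b : y < t1) by (pose proof (Rmin_r del (t1 - tau)); lra).
    assert (Cy : C y).
    { split; auto. split. lra. intros r Tr Hr. destruct (Rle_dec r tau). apply Sle; auto.
      apply K; auto; lra. }
    assert (y <= tau) by (apply Hub; auto). lra.
Qed.


Lemma GEN g c T0 : 0 <= c ->
  (forall t, T t -> t <= T0 -> 0 <= 1 - c * (Defs.sigma T t - t)) ->
  (forall t, T t -> exists d, delta_deriv T g t d /\ (t <= T0 -> - c * g t <= d)) ->
  0 <= g 0 -> forall t, T t -> t <= T0 -> 0 <= g t.
Proof.
  intros Hc Hmu Hd H0.
  assert (Main : forall eps, 0 < eps -> forall t, T t -> t <= T0 -> 0 <= g t + eps * t).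
  { intros eps Heps.
    set (w := fun x => 1 * g x + eps * x).
    assert (Dw : forall t, T t -> exists d, delta_deriv T w t d /\ (t <= T0 -> - c * w t + eps <= d)).
    { intros t Tt. destruct (Hd t Tt) as [d [Dd Hdd]]. exists (1 * d + eps * 1). split.
      - apply dd_lincomb; auto. apply dd_id.
      - intros Ht. specialize (Hdd Ht). unfold w. pose proof (ts_min T HT t Tt). assert (0 <= c * (eps * t)) by (apply Rmult_le_pos; [lra| apply Rmult_le_pos; lra]). lra. }
    assert (Hw : forall t, T t -> t <= T0 -> 0 <= w t).
    { apply (IND (fun t => t <= T0 -> 0 <= w t)).
      - intros _. unfold w. lra.
      - intros t Tt Hle Hlt Hs.
        assert (t <= T0) by lra. specialize (Hle t Tt (Rle_refl _) H).
        destruct (Dw t Tt) as [d [Dd Hdd]]. specialize (Hdd H).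
        rewrite (dd_rs w t d Tt Dd).
        specialize (Hmu t Tt H). nra.
      - intros t Tt Hle Hrd.
        destruct (Rle_dec T0 t) as [HT0|HT0].
        + exists 1. split. lra. intros s Ts ts _ Hs. lra.
        + assert (Ht0 : t <= T0) by lra. assert (Hwt := Hle t Tt (Rle_refl _) Ht0).
          destruct (Dw t Tt) as [d [Dd Hdd]]. specialize (Hdd Ht0).
          destruct (Dd (eps/2)) as [dl [Hdl K]]. lra.
          exists (Rmin dl (1 / (c + 1))). split.
          { apply Rmin_pos; auto. apply Rdiv_lt_0_compat; lra. }
          intros s Ts ts Hs _.
          assert (s1 : s - t < dl) by (pose proof (Rmin_l dl (1/(c+1))); lra).
          assert (s2 : s - t < 1 / (c + 1)) by (pose proof (Rmin_r dl (1/(c+1))); lra).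
          assert (Ks : Rabs (t - s) < dl) by (rewrite Rabs_left; lra).
          specialize (K s Ts Ks). rewrite Hrd in K.
          rewrite (Rabs_left (t - s)) in K by lra.
          apply abs_between in K.
          assert (c * (s - t) <= 1).
          { assert (c * (s - t) <= c * (1 / (c+1))) by (apply Rmult_le_compat_l; lra).
            assert (c * (1 / (c+1)) <= 1).
            { replace (c * (1 / (c+1))) with (1 - 1/(c+1)) by (field; lra).
              assert (0 < 1/(c+1)) by (apply Rdiv_lt_0_compat; lra). lra. }
            lra. }
          assert (0 <= w t * (1 - c * (s - t))) by (apply Rmult_le_pos; lra).
          nra.
      - intros t Tt Hlt Hld Ht0.
        destruct (Dw t Tt) as [d [Dd _]].
        apply (dd_cont_left w t d Tt Dd Hld). intros r Tr Hr. apply Hlt; auto. lra. }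
    intros t Tt Ht. specialize (Hw t Tt Ht). unfold w in Hw. lra. }
  intros t Tt Ht. apply Rnot_lt_le. intro Hneg.
  pose proof (ts_min T HT t Tt) as Ht0.
  set (e := - g t / (2 * (t + 1))).
  assert (He : 0 < e) by (unfold e; apply Rdiv_lt_0_compat; lra).
  specialize (Main e He t Tt Ht).
  assert (e * t < - g t); [|lra].
  assert (e * (t+1) = - g t / 2) by (unfold e; field; lra). nra.
Qed.


Lemma dd_rd f t l : T t -> Defs.sigma T t = t -> derivable_pt_lim f t l -> delta_deriv T f t l.
Proof.
  intros Tt Hrd Hl e He. destruct (Hl e He) as [dl Hdl]. exists dl. split. apply cond_pos.
  intros s Ts Hs. rewrite Hrd.
  destruct (Req_dec s t) as [E|E].
  - subst. replace (f t - f t - l * (t - t)) with 0 by ring. rewrite Rabs_R0.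
    apply Rmult_le_pos; [lra|apply Rabs_pos].
  - assert (Hh : s - t <> 0) by lra.
    assert (Hh2 : Rabs (s - t) < dl) by (rewrite <- Rabs_Ropp; replace (- (s - t)) with (t - s) by ring; auto).
    specialize (Hdl (s - t) Hh Hh2). replace (t + (s - t)) with s in Hdl by ring.
    replace (f t - f s - l * (t - s)) with (((f s - f t) / (s - t) - l) * (- (s - t))) by (field; auto).
    rewrite Rabs_mult, Rabs_Ropp. rewrite <- (Rabs_Ropp (t - s)). replace (- (t - s)) with (s - t) by ring.
    apply Rmult_le_compat_r. apply Rabs_pos. lra.
Qed.

Lemma dd_rsc f t l : T t -> t < Defs.sigma T t -> derivable_pt_lim f t l ->
  delta_deriv T f t ((f (Defs.sigma T t) - f t) / (Defs.sigma T t - t)).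
Proof.
  intros Tt Hrs Hl e He.
  set (mu := Defs.sigma T t - t). set (d := (f (Defs.sigma T t) - f t) / mu).
  assert (Hmu : 0 < mu) by (unfold mu; lra).
  assert (Ed : f (Defs.sigma T t) = f t + d * mu) by (unfold d; field; lra).
  destruct (Hl 1 Rlt_0_1) as [dl Hdl].
  set (M := Rabs l + 1 + Rabs d).
  assert (HM : 0 < M) by (unfold M; pose proof (Rabs_pos l); pose proof (Rabs_pos d); lra).
  exists (Rmin dl (Rmin mu (e * mu / M))). split.
  { apply Rmin_pos. apply cond_pos. apply Rmin_pos; auto. apply Rdiv_lt_0_compat; auto. nra. }
  intros s Ts Hs.
  assert (s1 : Rabs (t - s) < dl) by (pose proof (Rmin_l dl (Rmin mu (e * mu / M))); lra).
  assert (s2 : Rabs (t - s) < mu) by (pose proof (Rmin_r dl (Rmin mu (e * mu / M))); pose proof (Rmin_l mu (e * mu / M)); lra).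
  assert (s3 : Rabs (t - s) < e * mu / M) by (pose proof (Rmin_r dl (Rmin mu (e * mu / M))); pose proof (Rmin_r mu (e * mu / M)); lra).
  assert (sle : s <= t).
  { apply Rnot_lt_le. intro Hst. assert (Defs.sigma T t <= s) by (apply sigma_gap; auto).
    rewrite Rabs_left in s2 by lra. unfold mu in s2. lra. }
  rewrite Ed.
  replace (f t + d * mu - f s - d * (Defs.sigma T t - s)) with (f t - f s - d * (t - s)) by (unfold mu; ring).
  rewrite (Rabs_right (Defs.sigma T t - s)) by lra.
  destruct (Req_dec s t) as [E|E].
  - subst. replace (f t - f t - d * (t - t)) with 0 by ring. rewrite Rabs_R0. apply Rmult_le_pos; lra.
  - assert (Hh : s - t <> 0) by lra.
    assert (Hh2 : Rabs (s - t) < dl) by (rewrite <- Rabs_Ropp; replace (- (s - t)) with (t - s) by ring; auto).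
    specialize (Hdl (s - t) Hh Hh2). replace (t + (s - t)) with s in Hdl by ring.
    rewrite Rabs_right in s3 by lra.
    assert (B1 : Rabs (f s - f t) <= (Rabs l + 1) * (t - s)).
    { replace (f s - f t) with (((f s - f t) / (s - t) - l + l) * (s - t)) by (field; auto).
      rewrite Rabs_mult. rewrite (Rabs_left (s - t)) by lra.
      replace (- (s - t)) with (t - s) by ring. apply Rmult_le_compat_r. lra.
      eapply Rle_trans. apply Rabs_triang. lra. }
    assert (B2 : Rabs (f t - f s - d * (t - s)) <= M * (t - s)).
    { replace (f t - f s - d * (t - s)) with (- (f s - f t) + (- d) * (t - s)) by ring.
      eapply Rle_trans. apply Rabs_triang. rewrite Rabs_Ropp, Rabs_mult, Rabs_Ropp.
      rewrite (Rabs_right (t - s)) by lra. unfold M. lra. }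
    assert (M * (t - s) <= e * mu).
    { apply (Rmult_le_reg_r (/ M)). apply Rinv_0_lt_compat; auto.
      replace (M * (t - s) * / M) with (t - s) by (field; lra). unfold Rdiv in s3. lra. }
    assert (e * mu <= e * (Defs.sigma T t - s)) by (apply Rmult_le_compat_l; unfold mu; lra).
    lra.
Qed.

Lemma pow_diff_ge n t s : 0 <= t -> t <= s -> INR (S n) * t ^ n * (s - t) <= s ^ (S n) - t ^ (S n).
Proof.
  intros H1 H2. induction n.
  - simpl. lra.
  - rewrite S_INR. 
    replace (s ^ S (S n) - t ^ S (S n)) with (s * (s ^ S n - t ^ S n) + t ^ S n * (s - t)) by (simpl; ring).
    assert (0 <= t ^ n) by (apply pow_le; auto).
    assert (INR (S n) * t ^ n * (s - t) * t <= INR (S n) * t ^ n * (s - t) * s).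
    { apply Rmult_le_compat_l; auto. apply Rmult_le_pos; [apply Rmult_le_pos; [apply pos_INR|auto]|lra]. }
    assert (s * (INR (S n) * t ^ n * (s - t)) <= s * (s ^ S n - t ^ S n)) by (apply Rmult_le_compat_l; lra).
    simpl in *. nra.
Qed.

Lemma dd_pow n t : T t -> exists d, delta_deriv T (fun x => x ^ S n) t d /\ INR (S n) * t ^ n <= d.
Proof.
  intros Tt. pose proof (derivable_pt_lim_pow t (S n)) as Hl. simpl Nat.pred in Hl.
  pose proof (ts_min T HT t Tt) as Ht0.
  destruct (Rle_lt_or_eq_dec t (Defs.sigma T t) (sigma_ge t Tt)) as [Hrs|Hrd].
  - eexists. split. apply (dd_rsc _ _ _ Tt Hrs Hl).
    pose proof (pow_diff_ge n t (Defs.sigma T t) Ht0 (Rlt_le _ _ Hrs)).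
    apply (Rmult_le_reg_r (Defs.sigma T t - t)). lra.
    replace ((Defs.sigma T t ^ S n - t ^ S n) / (Defs.sigma T t - t) * (Defs.sigma T t - t))
      with (Defs.sigma T t ^ S n - t ^ S n) by (field; lra). auto.
  - exists (INR (S n) * t ^ n). split. apply dd_rd; auto. lra.
Qed.

End S.

Theorem mainTheorem11 (T : R -> Prop) (A k mux : R) (u : Z -> R -> R) :
  time_scale T -> 0 < A -> 0 < k -> 0 < mux ->
  (* (TS1) *)
  (forall t, T t -> 1 - k * graininess T t / mux > 0) ->
  is_solution_P T A k mux u ->
  forall t, T t ->
    (exists S, infinite_sum (fun n : nat => u (Z.of_nat n) t) S /\ mux * S = A * mux) /\
    (forall m : Z, (m < 0)%Z -> u m t = 0).
Proof.
  intros HT HA Hk Hmux TS1 [Hsol [H00 [Hinit Hbd]]].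
  set (c := k / mux).
  assert (Hc : 0 < c) by (unfold c; apply Rdiv_lt_0_compat; auto).
  assert (Hmu : forall t, T t -> 0 <= 1 - c * (Defs.sigma T t - t)).
  { intros t Tt. specialize (TS1 t Tt). unfold graininess in TS1.
    replace (c * (Defs.sigma T t - t)) with (k * (Defs.sigma T t - t) / mux) by (unfold c; field; lra). lra. }
  assert (Hder : forall m t, T t -> delta_deriv T (u m) t (- c * (u m t - u (m - 1)%Z t))).
  { intros m t Tt. destruct (Hsol m t Tt) as [d [Dd Ed]].
    assert (E : k * ((u m t - u (m - 1)%Z t) / mux) = c * (u m t - u (m - 1)%Z t)) by (unfold c; field; lra).
    replace (- c * (u m t - u (m - 1)%Z t)) with d by lra. auto. }
  assert (Hmin := ts_min T HT).
  assert (Hneg : forall t, T t -> forall m, (m < 0)%Z -> u m t = 0).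
  { intros t Tt.
    assert (Ht0 := Hmin t Tt).
    destruct (Hbd (t + 1)) as [B HB]. lra.
    assert (HB0 : 0 <= B) by (pose proof (HB 0%Z 0 (ts_zero T HT) ltac:(lra)); pose proof (Rabs_pos (u 0%Z 0)); lra).
    set (Q := fun n x => B * (c * x) ^ n / INR (fact n)).
    assert (Qpos : forall n x, 0 <= x -> 0 <= Q n x).
    { intros n x Hx. unfold Q. apply Rmult_le_pos. apply Rmult_le_pos; auto. apply pow_le. nra.
      left. apply Rinv_0_lt_compat. apply lt_0_INR. apply lt_O_fact. }
    assert (Claim : forall n m s, (m < 0)%Z -> T s -> s <= t + 1 -> Rabs (u m s) <= Q n s).
    { induction n; intros m s Hm Ts Hs.
      - unfold Q. simpl. replace (B * 1 / 1) with B by field. auto.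
      - set (K := B * c ^ S n / INR (fact (S n))).
        assert (HK : 0 <= K).
        { unfold K. apply Rmult_le_pos. apply Rmult_le_pos; auto. apply pow_le. lra.
          left. apply Rinv_0_lt_compat. apply lt_0_INR. apply lt_O_fact. }
        assert (QK : forall x, Q (S n) x = K * x ^ S n).
        { intros x. unfold Q, K. rewrite Rpow_mult_distr. field. apply INR_fact_neq_0. }
        assert (KQ : forall x, K * (INR (S n) * x ^ n) = c * Q n x).
        { intros x. unfold K, Q. rewrite Rpow_mult_distr. rewrite fact_simpl, mult_INR. simpl pow.
          field. split. apply INR_fact_neq_0. apply not_0_INR. lia. }
        assert (Hm1 : (m - 1 < 0)%Z) by lia.
        assert (G : forall sg : R, sg = 1 \/ sg = -1 -> 0 <= Q (S n) s - sg * u m s).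
        { intros sg Hsg.
          apply (GEN T HT (fun x => Q (S n) x - sg * u m x) c (t + 1)); auto.
          - lra.
          - intros r Tr. destruct (dd_pow T HT n r Tr) as [dp [Dp Hdp]].
            eexists. split.
            + apply (dd_ext T (fun x => K * x ^ S n + (- sg) * u m x)).
              { intros x. rewrite QK. ring. }
              apply dd_lincomb. exact Dp. apply Hder; auto.
            + intros Hr. assert (Hr0 := Hmin r Tr).
              pose proof (IHn (m - 1)%Z r Hm1 Tr Hr) as IH.
              apply abs_between in IH.
              assert (K * (INR (S n) * r ^ n) <= K * dp) by (apply Rmult_le_compat_l; auto).
              rewrite KQ in H.
              pose proof (Qpos (S n) r Hr0).
              destruct Hsg; subst sg; nra.
          - assert (Q (S n) 0 = 0) by (rewrite QK; simpl; ring).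
            rewrite H, (Hinit m) by lia. lra. }
        pose proof (G 1 (or_introl eq_refl)). pose proof (G (-1) (or_intror eq_refl)).
        apply Rabs_le. lra. }
    intros m Hm. assert (Hb := fun n => Claim n m t Hm Tt ltac:(lra)).
    destruct (Req_dec (u m t) 0) as [Ez|Ez]; auto. exfalso.
    assert (Hp : 0 < Rabs (u m t)) by (apply Rabs_pos_lt; auto).
    destruct (cv_speed_pow_fact (c * t) (Rabs (u m t) / (B + 1))) as [N HN].
    { apply Rdiv_lt_0_compat; lra. }
    specialize (HN N (le_n N)). specialize (Hb N).
    unfold Rdist in HN. rewrite Rminus_0_r in HN.
    assert (Hy : 0 <= (c * t) ^ N / INR (fact N)).
    { apply Rmult_le_pos. apply pow_le. nra. left. apply Rinv_0_lt_compat. apply lt_0_INR. apply lt_O_fact. }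
    rewrite Rabs_right in HN by lra.
    assert (Q N t = B * ((c * t) ^ N / INR (fact N))) by (unfold Q, Rdiv; ring).
    assert (B * ((c * t) ^ N / INR (fact N)) <= B * (Rabs (u m t) / (B + 1))) by (apply Rmult_le_compat_l; lra).
    assert (B * (Rabs (u m t) / (B + 1)) < Rabs (u m t)).
    { replace (B * (Rabs (u m t) / (B + 1))) with (Rabs (u m t) * (B / (B + 1))) by (field; lra).
      assert (B / (B + 1) < 1).
      { apply (Rmult_lt_reg_r (B + 1)). lra. unfold Rdiv. rewrite Rmult_assoc, Rinv_l; lra. }
      nra. }
    lra. }
  assert (Zs : forall N, (Z.of_nat (S N) - 1)%Z = Z.of_nat N) by (intros; lia).
  assert (Hpos : forall n s, T s -> 0 <= u (Z.of_nat n) s).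
  { induction n; intros s Ts.
    - apply (GEN T HT (u (Z.of_nat 0)) c s); auto. lra.
      + intros r Tr. exists (- c * (u (Z.of_nat 0) r - u (Z.of_nat 0 - 1)%Z r)). split. apply Hder; auto.
        intros _. rewrite (Hneg r Tr (Z.of_nat 0 - 1)%Z) by lia. lra.
      + simpl. lra.
      + lra.
    - apply (GEN T HT (u (Z.of_nat (S n))) c s); auto. lra.
      + intros r Tr. exists (- c * (u (Z.of_nat (S n)) r - u (Z.of_nat (S n) - 1)%Z r)). split. apply Hder; auto.
        intros _. rewrite Zs. pose proof (IHn r Tr). nra.
      + rewrite Hinit by lia. lra.
      + lra. }
  set (P := fun N x => sum_f_R0 (fun j => u (Z.of_nat j) x) N).
  assert (dP : forall N s, T s -> delta_deriv T (P N) s (- c * u (Z.of_nat N) s)).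
  { induction N; intros s Ts.
    - apply (dd_ext T (u (Z.of_nat 0))). intros; reflexivity.
      replace (- c * u (Z.of_nat 0) s) with (- c * (u (Z.of_nat 0) s - u (Z.of_nat 0 - 1)%Z s)).
      apply Hder; auto. rewrite (Hneg s Ts (Z.of_nat 0 - 1)%Z) by lia. ring.
    - apply (dd_ext T (fun x => 1 * P N x + 1 * u (Z.of_nat (S N)) x)).
      { intros x. unfold P. simpl. ring. }
      replace (- c * u (Z.of_nat (S N)) s) with (1 * (- c * u (Z.of_nat N) s) + 1 * (- c * (u (Z.of_nat (S N)) s - u (Z.of_nat (S N) - 1)%Z s))) by (rewrite Zs; ring).
      apply dd_lincomb. apply IHN; auto. apply Hder; auto. }
  assert (P0 : forall N, P N 0 = A).
  { induction N. unfold P; simpl. auto. unfold P in *; simpl. rewrite IHN, Hinit by lia. ring. }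
  assert (dAP : forall N s, T s -> delta_deriv T (fun x => A - P N x) s (c * u (Z.of_nat N) s)).
  { intros N s Ts. apply (dd_ext T (fun x => 1 * (fun _ => A) x + (-1) * P N x)).
    { intros x. simpl. ring. }
    replace (c * u (Z.of_nat N) s) with (1 * 0 + (-1) * (- c * u (Z.of_nat N) s)) by ring.
    apply dd_lincomb. apply dd_const. apply dP; auto. }
  assert (Hmu0 : forall t, T t -> t <= t -> 0 <= 1 - 0 * (Defs.sigma T t - t)) by (intros; lra).
  assert (Ple : forall N s, T s -> P N s <= A).
  { intros N s Ts. assert (0 <= A - P N s); [|lra].
    apply (GEN T HT (fun x => A - P N x) 0 s); auto. lra. intros; lra.
    - intros r Tr. exists (c * u (Z.of_nat N) r). split. apply dAP; auto.
      intros _. pose proof (Hpos N r Tr). nra.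
    - rewrite P0. lra.
    - lra. }
  set (D := fun M x => sum_f_R0 (fun N => A - P N x) M).
  assert (dD : forall M s, T s -> delta_deriv T (D M) s (c * P M s)).
  { induction M; intros s Ts.
    - apply (dd_ext T (fun x => A - P 0%nat x)). intros; reflexivity. apply dAP; auto.
    - apply (dd_ext T (fun x => 1 * D M x + 1 * (A - P (S M) x))).
      { intros x. unfold D. simpl. ring. }
      replace (c * P (S M) s) with (1 * (c * P M s) + 1 * (c * u (Z.of_nat (S M)) s)) by (unfold P; simpl; ring).
      apply dd_lincomb. apply IHM; auto. apply dAP; auto. }
  assert (D0 : forall M, D M 0 = 0).
  { induction M; unfold D in *; simpl. rewrite P0; ring. rewrite IHM, P0. ring. }
  assert (Dle : forall M s, T s -> D M s <= c * A * s).
  { intros M s Ts. assert (0 <= c * A * s - D M s); [|lra].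
    apply (GEN T HT (fun x => c * A * x - D M x) 0 s); auto. lra. intros; lra.
    - intros r Tr. exists ((c * A) * 1 + (-1) * (c * P M r)). split.
      + apply (dd_ext T (fun x => (c * A) * x + (-1) * D M x)). intros; ring.
        apply dd_lincomb. apply dd_id. apply dD; auto.
      + intros _. pose proof (Ple M r Tr). nra.
    - rewrite D0. lra.
    - lra. }
  assert (Dge : forall M s, T s -> INR (S M) * (A - P M s) <= D M s).
  { induction M; intros s Ts.
    - unfold D. simpl. lra.
    - replace (D (S M) s) with (D M s + (A - P (S M) s)) by (unfold D; simpl; ring).
      assert (P (S M) s = P M s + u (Z.of_nat (S M)) s) by (unfold P; simpl; ring).
      pose proof (Hpos (S M) s Ts). pose proof (IHM s Ts).
      assert (INR (S M) * (A - P (S M) s) <= INR (S M) * (A - P M s)).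
      { apply Rmult_le_compat_l. apply pos_INR. lra. }
      rewrite S_INR. lra. }
  intros t Tt. split; [|apply Hneg; auto].
  exists A. split; [|ring].
  intros eps Heps.
  destruct (INR_archimed eps (c * A * t) Heps) as [N HN].
  exists N. intros n Hn. unfold Rdist.
  change (sum_f_R0 (fun n0 : nat => u (Z.of_nat n0) t) n) with (P n t).
  pose proof (Ple n t Tt). pose proof (Dle n t Tt). pose proof (Dge n t Tt).
  rewrite Rabs_left1 by lra.
  assert (INR N <= INR (S n)) by (apply le_INR; lia).
  assert (INR N * eps <= INR (S n) * eps) by (apply Rmult_le_compat_r; lra).
  assert (INR (S n) * (A - P n t) < INR (S n) * eps) by lra.
  apply Rmult_lt_reg_l in H4. lra. apply lt_0_INR. lia.
Qed.
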